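(* Let $T$ be a tree and let $T'\subseteq T$ be a nonempty subset which is open and connected. Then $\chi_T(T')=2-\mathrm{card}\,\partial_T T'$.
   Context: A tree $T$ is a finite connected graph without cycles, with vertex set $V$ and edge set $E$ (edges are $2$-element subsets of $V$), regarded as the set $V\sqcup E$. It carries the topology whose closed sets are the sub-graphs, i.e. subsets containing both endpoints of each edge they contain. $\overline{T'}$ denotes the closure and $\partial_T T':=\overline{T'}\setminus T'$ the boundary. For a vertex $v$, $\mathrm{val}(v)$ is the number of edges containing $v$, $\chi_T(v):=2-\mathrm{val}(v)$, and for a subset $T'$, $\chi_T(T'):=\sum_{v\in V\cap T'}\chi_T(v)$. *)

(* Defs.v *)
From mathcomp Require Import all_boot all_order all_algebra.
Set Implicit Arguments. Unset Strict Implicit. Unset Printing Implicit Defensive.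
Import GRing.Theory Num.Theory.

Section Tree.
Variables (V : finType) (E : {set {set V}}).

Definition is_graph : Prop := forall e, e \in E -> #|e| = 2.

Definition adj : rel V := fun x y => [set x; y] \in E.

Definition is_tree : Prop :=
  is_graph /\ (forall x y : V, connect adj x y) /\
  (forall c : seq V, 3 <= size c -> ~~ (cycle adj c && uniq c)).

(* The space T = V ⊔ E, represented inside V + {set V}. *)
Definition pt := (V + {set V})%type.
Definition points : {set pt} :=
  [set x : pt | match x with inl _ => true | inr e => e \in E end].

(* closed sets = sub-graphs *)
Definition closedb (S : {set pt}) : bool :=
  (S \subset points) &&
  [forall e : {set V}, (inr e \in S) ==> [forall v in e, inl v \in S]].

Definition openb (S : {set pt}) : bool :=
  (S \subset points) && closedb (points :\: S).

Definition closure (S : {set pt}) : {set pt} :=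
  \bigcap_(C | closedb C && (S \subset C)) C.

Definition boundary (S : {set pt}) : {set pt} := closure S :\: S.

Definition connectedb (S : {set pt}) : Prop :=
  forall U1 U2 : {set pt}, openb U1 -> openb U2 ->
    S \subset U1 :|: U2 -> S :&: U1 :&: U2 = set0 ->
    S :&: U1 = set0 \/ S :&: U2 = set0.

Definition valence (v : V) : nat := #|[set e in E | v \in e]|.
Definition chi_v (v : V) : int := 2%:Z - (valence v)%:Z.
Definition chi (S : {set pt}) : int := \sum_(v : V | inl v \in S) chi_v v.

End Tree.

(* Main.v *)
Require Import Defs.
From mathcomp Require Import all_boot all_order all_algebra.
From mathcomp Require Import zify.
Import GRing.Theory Num.Theory.
Set Implicit Arguments. Unset Strict Implicit. Unset Printing Implicit Defensive.

Section Aux.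
Variables (V : finType) (E : {set {set V}}).
Hypothesis Htree : is_tree E.

Lemma edge_eq e x y : e \in E -> x \in e -> y \in e -> x != y -> e = [set x; y].
Proof.
move=> eE xe ye xy; case: Htree => Hg _.
apply/eqP; rewrite eq_sym eqEcard; apply/andP; split.
  by apply/subsetP=> z; rewrite !inE => /orP[]/eqP->.
by rewrite cards2 xy (Hg _ eE).
Qed.

Lemma edge_other e u : e \in E -> u \in e -> exists w, w != u /\ e = [set u; w].
Proof.
move=> eE ue; case: Htree => Hg _.
have /cards2P [x [y [xy ex]]] : #|e| == 2 by rewrite (Hg _ eE).
move: ue; rewrite ex !inE => /orP[]/eqP->.
  by exists y; split; rewrite // eq_sym.
by exists x; split; [exact: xy | rewrite setUC].
Qed.

Lemma adj_neq x y : adj E x y -> x != y.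
Proof.
rewrite /adj => h; case: Htree => Hg _; move: (Hg _ h); rewrite cards2.
by case: (x != y).
Qed.

Lemma adj_sym x y : adj E x y = adj E y x.
Proof. by rewrite /adj setUC. Qed.

Lemma path_all_snd (r : rel V) (P : pred V) x p :
  (forall u w, r u w -> P w) -> path r x p -> all P p.
Proof.
move=> H; elim: p x => [|y p IH] x //= /andP[rxy pp].
by rewrite (H _ _ rxy) (IH _ pp).
Qed.

Lemma no_cycle c : 3 <= size c -> cycle (adj E) c -> uniq c -> False.
Proof. by case: Htree => _ [_ H] s cy u; move: (H c s); rewrite cy u. Qed.

Lemma cut2 b x y : x != y -> adj E b x -> adj E b y ->
  connect (fun u w => adj E u w && (w != b)) x y -> False.
Proof.
move=> xy bx hby /connectP [p pp yl]; move: yl; case: (shortenP pp) => p' pp' up' _ yl.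
have bnx : x != b by rewrite eq_sym (adj_neq bx).
have allp : all (fun w => w != b) p'.
  by apply: (path_all_snd (r := fun u w => adj E u w && (w != b))) pp' => u w /andP[].
have pa : path (adj E) x p' by apply: sub_path pp' => u w /andP[].
apply: (@no_cycle (b :: x :: p')).
- case: p' {pp' up' allp pa} yl => [|z p'] /= yl; first by rewrite yl eqxx in xy.
  by [].
- by rewrite /= rcons_path bx pa /= -yl adj_sym.
- rewrite cons_uniq up' andbT inE negb_or eq_sym bnx /=.
  by apply/negP=> /(allP allp); rewrite eqxx.
Qed.

Lemma cutE (r : rel V) u w : (forall a b, r a b -> adj E a b) -> ~~ r u w ->
  adj E u w -> connect r u w -> False.
Proof.
move=> sub nr auw /connectP [p pp wl]; move: wl; case: (shortenP pp) => p' pp' up' _ wl.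
have Hl : last u p' = w by rewrite wl.
clear wl.
have uw := adj_neq auw.
have pa : path (adj E) u p' by apply: sub_path pp'.
have sz : 2 <= size p'.
  case: p' pp' up' pa Hl => [|z [|z' p']] //=.
  + by move=> _ _ _ Hl; rewrite Hl eqxx in uw.
  + by move=> /andP[ruz _] _ _ Hl; rewrite -Hl ruz in nr.
apply: (@no_cycle (u :: p')) => //.
by rewrite /= rcons_path pa Hl /= adj_sym.
Qed.

Definition Rinc (p q : pt V) : bool :=
  match p, q with
  | inl v, inr e => (e \in E) && (v \in e)
  | inr e, inl v => (e \in E) && (v \in e)
  | _, _ => false end.
Definition RA (A : {set pt V}) : rel (pt V) :=
  fun p q => [&& p \in A, q \in A & Rinc p q].
Definition touch (p : pt V) (x : V) : bool :=
  match p with inl v => x == v | inr e => x \in e end.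
Definition adjA (A : {set pt V}) : rel V :=
  fun x y => [&& (inl x : pt V) \in A, (inl y : pt V) \in A & (inr [set x; y] : pt V) \in A].
Definition conn (A : {set pt V}) := forall p q, p \in A -> q \in A -> connect (RA A) p q.

Lemma Rinc_sym p q : Rinc p q = Rinc q p.
Proof. by case: p; case: q. Qed.

Lemma RA_sym A p q : RA A p q = RA A q p.
Proof. by rewrite /RA Rinc_sym andbCA. Qed.

Lemma pointsE (e : {set V}) : ((inr e : pt V) \in points E) = (e \in E).
Proof. by rewrite inE. Qed.

Lemma edge_conn (A : {set pt V}) e x y : A \subset points E -> inr e \in A ->
  x \in e -> y \in e -> inl x \in A -> inl y \in A -> connect (adjA A) x y.
Proof.
move=> sA eA xe ye xA yA; have [->|xy] := eqVneq x y; first exact: connect0.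
have eE : e \in E by rewrite -pointsE (subsetP sA _ eA).
apply: connect1; rewrite /adjA xA yA -(edge_eq eE xe ye xy) //.
Qed.

Lemma Lpath (A : {set pt V}) : A \subset points E -> forall s p, path (RA A) p s -> p \in A ->
  forall x y, touch p x -> inl x \in A -> touch (last p s) y -> inl y \in A ->
  connect (adjA A) x y.
Proof.
move=> sA; elim=> [|p2 s IH] p /=.
  move=> _ pA x y; case: p pA => [v|e] pA /=.
    by move=> /eqP-> _ /eqP->; rewrite connect0.
  by move=> xe xA ye yA; apply: (edge_conn sA pA).
move=> /andP[/and3P[_ p2A R] ps] pA x y tx xA ty yA.
case: p pA tx xA R => [v|e] pA tx xA; case: p2 p2A ps ty => [z|f] p2A ps ty //= /andP[fE vf].
  move/eqP: tx => ->; apply: (IH _ ps p2A) => //; by move/eqP: tx xA => ->.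
have := IH _ ps p2A z y (eqxx _) p2A ty yA.
apply: connect_trans; exact: (edge_conn sA pA).
Qed.

Lemma touch_ex (A : {set pt V}) p q : conn A -> p \in A -> q \in A -> p != q ->
  exists x, touch p x && (inl x \in A).
Proof.
move=> cA pA qA pq; case: p pA pq => [v|e] pA pq.
  by exists v; rewrite /= eqxx pA.
move: (cA _ _ pA qA) => /connectP [[|z s] /= ps ql].
  by rewrite ql eqxx in pq.
clear ql; case/andP: ps => /and3P[_ zA R] _; case: z zA R => [x|f] zA //= /andP[_ xe].
by exists x; rewrite xe zA.
Qed.

Lemma connA (A : {set pt V}) p q x y : A \subset points E -> conn A -> p \in A -> q \in A ->
  touch p x -> inl x \in A -> touch q y -> inl y \in A -> connect (adjA A) x y.
Proof.
move=> sA cA pA qA tx xA ty yA; case/connectP: (cA _ _ pA qA) => s ps ql.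
by apply: (Lpath sA ps pA tx xA) => //; rewrite -ql.
Qed.

Lemma exitP (S A : {set pt V}) x s : path (RA S) x s -> x \in A -> last x s \notin A ->
  exists q p, [/\ q \in A, p \notin A, p \in S & Rinc q p].
Proof.
elim: s x => [|y s IH] x /=; first by move=> _ ->.
move=> /andP[/and3P[_ yS R] ps] xA ls.
have [yA|nyA] := boolP (y \in A); first exact: (IH y ps yA ls).
by exists x, y.
Qed.

Lemma open_edge (S : {set pt V}) v e : openb E S -> inl v \in S -> e \in E -> v \in e ->
  inr e \in S.
Proof.
case/andP=> _ /andP[_ /forallP /(_ e) H] vS eE ve.
apply/negPn/negP=> eS.
have h : (inr e : pt V) \in points E :\: S by rewrite !inE eS eE.
move/implyP: H => /(_ h) /forallP /(_ v) /implyP /(_ ve).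
by rewrite inE vS.
Qed.

Lemma openP (U : {set pt V}) : U \subset points E ->
  (forall v e, e \in E -> v \in e -> inl v \in U -> inr e \in U) -> openb E U.
Proof.
move=> sU H; rewrite /openb sU /closedb subsetDl /=.
apply/forallP=> e; apply/implyP; rewrite !inE => /andP[eU eE].
apply/forallP=> v; apply/implyP=> ve; rewrite !inE andbT.
by apply/negP=> vU; rewrite (H _ _ eE ve vU) in eU.
Qed.

Lemma topo_conn (S : {set pt V}) : openb E S -> connectedb E S -> conn S.
Proof.
move=> oS cS x y xS yS.
have sS : S \subset points E by case/andP: oS.
pose U1 := [set z in S | connect (RA S) x z].
pose U2 := S :\: U1.
have sU1 : U1 \subset points E.
  by apply: subset_trans sS; apply/subsetP=> z; rewrite inE => /andP[].
have oU1 : openb E U1.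
  apply: openP => // v e eE ve; rewrite !inE => /andP[vS cv].
  have eS := open_edge oS vS eE ve.
  rewrite eS; apply: connect_trans cv (connect1 _).
  by rewrite /RA vS eS /= eE ve.
have oU2 : openb E U2.
  apply: openP; first by apply: subset_trans sS; apply: subsetDl.
  move=> v e eE ve; rewrite !inE => /andP[nv vS].
  have eS := open_edge oS vS eE ve.
  rewrite eS andbT; apply/negP=> ce; move: nv; rewrite vS /=.
  apply/negP/negPn; apply: connect_trans ce (connect1 _).
  by rewrite /RA vS eS /= eE ve.
have cov : S \subset U1 :|: U2.
  by apply/subsetP=> z zS; rewrite !inE zS; case: (connect _ _ _).
have dis : S :&: U1 :&: U2 = set0.
  by apply/setP=> z; rewrite !inE; case: (z \in S); case: (connect _ _ _).
case: (cS _ _ oU1 oU2 cov dis) => /setP H.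
  by move: (H x); rewrite !inE xS connect0.
by move: (H y); rewrite !inE yS /=; case: (connect _ _ _).
Qed.

Definition Bd (A : {set pt V}) : {set V} :=
  [set b | (inl b \notin A) && [exists e, (inr e \in A) && (b \in e)]].

Lemma closureE (S : {set pt V}) : S \subset points E ->
  Defs.closure E S = S :|: [set inl b | b in Bd S].
Proof.
move=> sS; apply/setP=> z; apply/bigcapP/idP.
- apply; apply/andP; split; last exact: subsetUl.
  rewrite /closedb; apply/andP; split.
    apply/subsetP=> w; rewrite inE => /orP[/(subsetP sS)//|/imsetP[b _ ->]].
    by rewrite inE.
  apply/forallP=> e; apply/implyP; rewrite inE => /orP[eS|/imsetP[b _ //]].
  apply/forallP=> v; apply/implyP=> ve; rewrite inE.
  have [//|vS] := boolP (inl v \in S).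
  apply/orP; right; apply/imsetP; exists v => //.
  by rewrite inE vS /=; apply/existsP; exists e; rewrite eS ve.
- rewrite inE => /orP[zS|/imsetP[b]].
    by move=> C /andP[_ /subsetP]; apply.
  rewrite inE => /andP[_ /existsP[e /andP[eS be]]] -> C /andP[cC sC].
  case/andP: cC => _ /forallP /(_ e); rewrite (subsetP sC _ eS) /=.
  by move=> /forallP /(_ b); rewrite be.
Qed.

Lemma card_boundary (S : {set pt V}) : S \subset points E ->
  #|boundary E S| = #|Bd S|.
Proof.
move=> sS; rewrite /boundary closureE // setDUl setDv set0U.
have -> : [set (inl b : pt V) | b in Bd S] :\: S = [set inl b | b in Bd S].
  apply/setP=> z; rewrite !inE; apply/andb_idl => /imsetP[b]; rewrite inE.
  by case/andP=> h _ ->.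
by apply: card_imset => a b [].
Qed.

Definition OutS (A : {set pt V}) v : {set {set V}} :=
  [set f in E | (v \in f) && (inr f \notin A)].
Definition Out (A : {set pt V}) : nat := (\sum_(v | inl v \in A) #|OutS A v|)%N.
Definition Pf (A : {set pt V}) : Prop :=
  (chi E A + (#|Bd A|)%:Z + (Out A)%:Z = 2%:Z)%R.

Lemma inl_eq (u v : V) : ((inl u : pt V) == inl v) = (u == v).
Proof. by apply/eqP/eqP => [[]|->]. Qed.
Lemma inr_eq (u v : {set V}) : ((inr u : pt V) == inr v) = (u == v).
Proof. by apply/eqP/eqP => [[]|->]. Qed.

Lemma P_vertex v : Pf [set inl v].
Proof.
rewrite /Pf /chi /Out.
rewrite (eq_bigl (fun u => u == v)); last by move=> u; rewrite inE inl_eq.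
rewrite [X in (_ + X%:Z)%R](eq_bigl (fun u => u == v)); last by move=> u; rewrite inE inl_eq.
rewrite !big_pred1_eq.
have -> : Bd [set inl v] = set0.
  by apply/setP=> b; rewrite !inE; apply/negbTE/negP=> /andP[_ /existsP[e]]; rewrite inE.
have -> : OutS [set inl v] v = [set e in E | v \in e].
  by apply/setP=> e; rewrite !inE andbT.
by rewrite cards0 /chi_v /valence; lia.
Qed.

Lemma P_edge e : e \in E -> Pf [set inr e].
Proof.
move=> eE; rewrite /Pf /chi /Out !big_pred0; try by move=> u; rewrite inE.
have -> : Bd [set inr e] = e.
  apply/setP=> b; rewrite !inE /=; apply/existsP/idP => [[f]|be].
    by rewrite inE inr_eq => /andP[/eqP->].
  by exists e; rewrite inE eqxx.
case: Htree => Hg _; rewrite (Hg _ eE); lia.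
Qed.

Lemma inr_inl (e : {set V}) v : ((inr e : pt V) == inl v) = false.
Proof. by []. Qed.
Lemma inl_inr (e : {set V}) v : ((inl v : pt V) == inr e) = false.
Proof. by []. Qed.

Lemma step_vertex (A : {set pt V}) v e0 : A \subset points E -> conn A -> Pf A ->
  inl v \notin A -> inr e0 \in A -> v \in e0 -> Pf (inl v |: A).
Proof.
move=> sA cA PA vA e0A ve0.
have ptE f : inr f \in A -> f \in E by move=> fA; rewrite -pointsE (subsetP sA _ fA).
have e0E := ptE _ e0A.
have uniq_e : forall e1, inr e1 \in A -> v \in e1 -> e1 = e0.
  move=> e1 e1A ve1; apply/eqP; apply/negPn/negP => ne.
  have n01 : (inr e0 : pt V) != inr e1 by rewrite inr_eq eq_sym.
  have n10 : (inr e1 : pt V) != inr e0 by rewrite inr_eq.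
  have [a1 /andP[a1e0 a1A]] := touch_ex cA e0A e1A n01.
  have [a2 /andP[a2e1 a2A]] := touch_ex cA e1A e0A n10.
  have va1 : v != a1 by apply/eqP=> h; rewrite h a1A in vA.
  have va2 : v != a2 by apply/eqP=> h; rewrite h a2A in vA.
  have He0 := edge_eq e0E ve0 a1e0 va1.
  have He1 := edge_eq (ptE _ e1A) ve1 a2e1 va2.
  have a12 : a1 != a2 by apply/eqP=> h; rewrite He0 He1 h eqxx in ne.
  apply: (@cut2 v a1 a2 a12); first by rewrite /adj -He0.
    by rewrite /adj -He1 (ptE _ e1A).
  apply: (connect_sub _ (connA sA cA e0A e1A a1e0 a1A a2e1 a2A)).
  move=> x y /and3P[_ yA xyA]; apply: connect1; rewrite /adj (ptE _ xyA) /=.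
  by apply/eqP=> h; rewrite -h yA in vA.
have hchi : chi E (inl v |: A) = (chi_v E v + chi E A)%R.
  rewrite /chi (bigD1 v) /=; last by rewrite setU11.
  congr (_ + _)%R; apply: eq_bigl => u; rewrite !inE inl_eq.
  by case: (eqVneq u v) => [->|] /=; rewrite ?(negbTE vA) ?andbT.
have hBd : Bd (inl v |: A) = Bd A :\ v.
  apply/setP=> b; rewrite !inE inl_eq negb_or -andbA; congr (_ && (_ && _)).
  by apply: eq_existsb => f; rewrite !inE inr_inl.
have vBd : v \in Bd A by rewrite inE vA /=; apply/existsP; exists e0; rewrite e0A ve0.
have hcard : #|Bd A| = (#|Bd A :\ v|).+1 by rewrite (cardsD1 v) vBd.
have hOS u : OutS (inl v |: A) u = OutS A u.
  by apply/setP=> f; rewrite !inE inr_inl.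
have hOut : Out (inl v |: A) = (Out A + #|OutS A v|)%N.
  rewrite /Out (bigD1 v) /=; last by rewrite setU11.
  rewrite addnC hOS; congr (_ + _)%N; apply: eq_big => u; last by rewrite hOS.
  rewrite !inE inl_eq.
  by case: (eqVneq u v) => [->|] /=; rewrite ?(negbTE vA) ?andbT.
have hval : valence E v = (#|OutS A v|).+1.
  rewrite /valence.
  have -> : [set e in E | v \in e] = e0 |: OutS A v.
    apply/setP=> f; rewrite !inE.
    have [fA|fA] := boolP (inr f \in A).
      rewrite /= !andbF orbF; apply/idP/eqP => [/andP[_ vf]|->]; first exact: uniq_e.
      by rewrite e0E ve0.
    rewrite /= !andbT; case: (eqVneq f e0) => [h|//]; by rewrite h e0A in fA.
  by rewrite cardsU1 /OutS inE e0A /= !andbF.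
move: PA; rewrite /Pf hchi hBd hOut /chi_v hval hcard; lia.
Qed.

Lemma step_edge (A : {set pt V}) u e : A \subset points E -> conn A -> Pf A ->
  inr e \notin A -> e \in E -> inl u \in A -> u \in e -> Pf (inr e |: A).
Proof.
move=> sA cA PA eA eE uA ue.
have ptE f : inr f \in A -> f \in E by move=> fA; rewrite -pointsE (subsetP sA _ fA).
have [w [wu He]] := edge_other eE ue.
have wA : inl w \notin A.
  apply/negP => wA; apply: (@cutE (adjA A) u w).
  - by move=> a b /and3P[_ _ h]; rewrite /adj (ptE _ h).
  - by rewrite /adjA -He (negbTE eA) !andbF.
  - by rewrite /adj -He.
  - exact: (@connA A (inl u) (inl w) u w sA cA uA wA (eqxx u) uA (eqxx w) wA).
have wBd : w \notin Bd A.
  rewrite inE wA /=; apply/negP => /existsP [f /andP[fA wf]].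
  have nfu : (inr f : pt V) != inl u by rewrite inr_inl.
  have [z /andP[zf zA]] := touch_ex cA fA uA nfu.
  have wz : w != z by apply/eqP => h; rewrite h zA in wA.
  have Hf := edge_eq (ptE _ fA) wf zf wz.
  have uz : u != z.
    by apply/eqP => h; rewrite Hf -h setUC -He in fA; rewrite fA in eA.
  apply: (@cut2 w u z uz); first by rewrite /adj setUC -He.
    by rewrite /adj -Hf (ptE _ fA).
  apply: (connect_sub _ (@connA A (inl u) (inr f) u z sA cA uA fA (eqxx u) uA zf zA)).
  move=> x y /and3P[_ yA xyA]; apply: connect1; rewrite /adj (ptE _ xyA) /=.
  by apply/eqP=> h; rewrite -h yA in wA.
have hchi : chi E (inr e |: A) = chi E A.
  by rewrite /chi; apply: eq_bigl => x; rewrite !inE inl_inr.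
have hBd : Bd (inr e |: A) = w |: Bd A.
  apply/setP=> b; rewrite !inE inl_inr /=.
  case: (eqVneq b w) => [->|bw] /=.
    by rewrite wA /=; apply/existsP; exists e; rewrite setU11 He !inE eqxx orbT.
  have [bA|bA] := boolP (inl b \in A) => //=.
  apply/existsP/existsP => [[f /andP[/setU1P[[fe]|fA] bf]]|[f /andP[fA bf]]].
  - move: bf; rewrite fe He !inE => /orP[/eqP hb|/eqP hb].
      by rewrite hb uA in bA.
    by rewrite hb eqxx in bw.
  - by exists f; rewrite fA bf.
  - by exists f; rewrite inE fA bf orbT.
have hcard : #|w |: Bd A| = (#|Bd A|).+1 by rewrite cardsU1 wBd.
have hOS x : inl x \in A -> x != u -> OutS (inr e |: A) x = OutS A x.
  move=> xA xu; apply/setP=> f; rewrite !inE inr_eq.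
  case: (eqVneq f e) => [->|//] /=.
  rewrite He !inE (negbTE xu) /=.
  by case: (eqVneq x w) => [h|] /=; [rewrite -h xA in wA | rewrite !andbF].
have hOSu : OutS (inr e |: A) u = OutS A u :\ e.
  apply/setP=> f; rewrite !inE inr_eq.
  by case: (eqVneq f e) => [->|] /=; rewrite ?andbF ?andbT.
have eOS : e \in OutS A u by rewrite inE eE ue eA.
have hOut : (Out (inr e |: A)).+1 = Out A.
  rewrite /Out (eq_bigl (fun x => inl x \in A)); last by move=> x; rewrite !inE inl_inr.
  rewrite (bigD1 u uA) [in RHS](bigD1 u uA) /= hOSu [in RHS](cardsD1 e (OutS A u)) eOS.
  rewrite (eq_bigr (fun x => #|OutS A x|)); last by move=> x /andP[xA xu]; rewrite hOS.
  by rewrite add1n addSn.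
move: PA; rewrite /Pf hchi hBd hcard -hOut; lia.
Qed.

Lemma conn_add (A : {set pt V}) p q : conn A -> q \in A -> Rinc q p -> conn (p |: A).
Proof.
move=> cA qA R.
have mono a b : connect (RA A) a b -> connect (RA (p |: A)) a b.
  apply: connect_sub => c d /and3P[cA' dA R']; apply: connect1.
  by rewrite /RA !inE cA' dA R' !orbT.
have pq : RA (p |: A) p q by rewrite /RA !inE eqxx qA orbT Rinc_sym R.
have qp : RA (p |: A) q p by rewrite RA_sym.
move=> a b /setU1P[->|aA] /setU1P[->|bA].
- exact: connect0.
- exact: connect_trans (connect1 pq) (mono _ _ (cA _ _ qA bA)).
- exact: connect_trans (mono _ _ (cA _ _ aA qA)) (connect1 qp).
- exact: (mono _ _ (cA _ _ aA bA)).
Qed.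

Lemma grow (S : {set pt V}) x0 : S \subset points E -> conn S -> x0 \in S ->
  forall k, 0 < k <= #|S| -> exists A : {set pt V}, [/\ A \subset S, #|A| = k, conn A & Pf A].
Proof.
move=> sS cS x0S; elim=> [//|k IH] /andP[_ ks].
case: k IH ks => [|k] IH ks.
  exists [set x0]; split; first by rewrite sub1set.
  - by rewrite cards1.
  - by move=> p q /set1P-> /set1P->; exact: connect0.
  case: x0 x0S => [v|e] x0S; first exact: P_vertex.
  by apply: P_edge; rewrite -pointsE (subsetP sS _ x0S).
have [A [sAS cardA cA PA]] := IH (ltnW ks).
have /subsetPn [y yS yA] : ~~ (S \subset A).
  by apply/negP=> /subset_leq_card; rewrite cardA leqNgt ks.
have /set0Pn [x xA] : A != set0 by rewrite -card_gt0 cardA.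
case/connectP: (cS _ _ (subsetP sAS _ xA) yS) => s ps yl.
have [q [p [qA pA pS R]]] : exists q p, [/\ q \in A, p \notin A, p \in S & Rinc q p].
  by apply: (exitP ps xA); rewrite -yl.
exists (p |: A); split.
- by apply/subsetP => z /setU1P[->|/(subsetP sAS)].
- by rewrite cardsU1 pA cardA.
- exact: (conn_add cA qA R).
have ptE f : inr f \in A -> f \in E by move=> fA; rewrite -pointsE (subsetP sS _ (subsetP sAS _ fA)).
case: q p qA pA pS R => [u|e0] [v|e] qA pA pS //= /andP[eE ve].
  exact: (step_edge (subset_trans sAS sS) cA PA pA eE qA ve).
exact: (step_vertex (subset_trans sAS sS) cA PA pA qA ve).
Qed.
End Aux.

Unset Implicit Arguments.
Local Open Scope ring_scope.

Theorem lemma2p8 (V : finType) (E : {set {set V}}) (T' : {set pt V}) :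
  is_tree E -> T' \subset points E -> T' != set0 ->
  openb E T' -> connectedb E T' ->
  chi E T' = 2%:Z - (#|boundary E T'|)%:Z.
Proof.
move=> Ht sT ne oT cT.
have cA := topo_conn oT cT.
have /set0Pn [x0 x0T] := ne.
have kpos : (0 < #|T'| <= #|T'|)%N by rewrite leqnn andbT card_gt0.
have [A [sA cardA _ PA]] := grow Ht sT cA x0T kpos.
have AT : A = T'.
  by apply/eqP; rewrite eqEcard sA cardA leqnn.
rewrite AT in PA.
have O0 : Out E T' = 0%N.
  rewrite /Out big1 // => v vT; apply/eqP; rewrite cards_eq0; apply/eqP/setP => f.
  rewrite !inE; apply/negbTE/negP => /and3P[fE vf fT].
  by rewrite (open_edge oT vT fE vf) in fT.
move: PA; rewrite /Pf O0 (card_boundary sT); lia.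
Qed.
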